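(* Let $T(u)=\exp\big(u\,\mathrm{diag}\big(\begin{psmallmatrix}0&1\\1&0\end{psmallmatrix},\begin{psmallmatrix}0&1\\-1&0\end{psmallmatrix},0\big)\big)\in SO^+(1,4)$ and let $\xi_i=T(u)E_i$. Consider Willmore surfaces (with dual surfaces) invariant under $T$, with initial curve $Y(u)=T(u)(a,0,b,0,c)^t$, $a=\cos\theta$, $b=\sin\theta$, $c=\sqrt{\cos2\theta}$, $0\le\theta\le\pi/4$, and invariant frame along it given in the basis $\xi_i$ by $\psi=(0,-b^2q,-\frac ca\sqrt{1-b^2q^2},abq,\frac ba\sqrt{1-b^2q^2})+hY$, $P_1=(0,a,0,b,0)+mY$, $P_2=(-cq,-b\sqrt{1-b^2q^2},0,a\sqrt{1-b^2q^2},-aq)+pY$ with real constants $h,m,q,p$, $|q|\le1/|b|$, and $\hat Y$ the null vector orthogonal to $P_1,P_2,\psi,\psi'$ with $\langle\hat Y,Y\rangle=-1$. Then all such surfaces are obtained as follows: (i) If $c\ne0$, then $p=\frac{amh+a^2q-bcm\sqrt{1-b^2q^2}}{ac}$ and the Björling data are $(\mu_1,\mu_2,k_1,k_2)=\big(m,\ acq-p,\ \frac{bc\sqrt{1-b^2q^2}}{2a}-\frac h2,\ -\frac c2\big)$, $\rho_1=\frac{a^2h^2-2abch\sqrt{1-q^2b^2}+a^2p^2+c^4q^2-2a^3cpq-a^2m^2+c^2}{2a^2}$, $\rho_2=\frac{a^2cmq-ach-amp-b\sqrt{1-q^2b^2}}{a}$, with $0\le\theta<\pi/4$, $|q|\le1/|\sin\theta|$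 and $m,q,h$ arbitrary. (ii) If $c=0$, the Björling data are $(\mu_1,\mu_2,k_1,k_2,\rho_1,\rho_2)=\big(m,-p,-\frac h2,0,\frac{h^2+p^2-m^2}2,-pm-\sqrt{1-h^2m^2}\big)$ with $h,m,p\in\mathbb R$ arbitrary subject to $|hm|\le1$.
   Context: $\mathbb R^5_1$ is $\mathbb R^5$ with $\langle x,y\rangle=-x_0y_0+\sum_{j=1}^4x_jy_j$ and standard basis $E_0,\dots,E_4$; surfaces are $y=[Y]$ with $Y$ in the forward light cone. For a Willmore surface with canonical lift $Y$ w.r.t. $z=u+iv$ ($\langle Y_z,Y_z\rangle=0,\langle Y_z,Y_{\bar z}\rangle=\frac12$), conformal Gauss map $\psi$ (unit spacelike, orthogonal to $Y,Y_z,Y_{\bar z},Y_{z\bar z}$) and dual surface $[\hat Y]$ (second envelope of $\psi$: $\langle\hat Y,\psi\rangle=\langle\hat Y,\psi_z\rangle=0$, $\langle Y,\hat Y\rangle=-1$), with unit vector fields $P_1,P_2$ along $v=0$ satisfying $P_1\equiv Y_u\bmod Y$, $P_1\perp\hat Y$, $P_2\perp\{\psi,Y,\hat Y,P_1\}$, the Björling data are the real functions with $Y_u=-\mu_1Y+P_1$, $\hat Y_u=\mu_1\hat Y+\rho_1P_1+\rho_2P_2$, $P_{1u}=\mu_2P_2+2k_1\psi+\hat Y+\rho_1Y$, $P_{2u}=-\mu_2P_1-2k_2\psi+\rho_2Y$, $\psi_u=-2k_1P_1+2k_2P_2$. The constraint $\langle\hat Y,\psi'\rangle=0$ is equivalent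 to $amh+a^2q-bcm\sqrt{1-b^2q^2}-acp=0$. *)

(* Defs.v *)
From Stdlib Require Import Reals.
Open Scope R_scope.

(** Vectors of R^5_1, coordinates indexed 0..4 (indices >= 5 are ignored). *)
Definition vec := nat -> R.

Definition lor (x y : vec) : R :=
  - x 0%nat * y 0%nat + x 1%nat * y 1%nat + x 2%nat * y 2%nat
  + x 3%nat * y 3%nat + x 4%nat * y 4%nat.

Definition vec5 (a0 a1 a2 a3 a4 : R) : vec :=
  fun i => match i with
           | 0%nat => a0 | 1%nat => a1 | 2%nat => a2 | 3%nat => a3 | 4%nat => a4
           | _ => 0 end.

Definition vadd (x y : vec) : vec := fun i => x i + y i.
Definition vscal (k : R) (x : vec) : vec := fun i => k * x i.

Definition E (i : nat) : vec := fun j => if Nat.eqb j i then 1 else 0.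

(** T(u) = exp(u A) with A = diag([[0,1],[1,0]], J, 0), acting on column
    vectors, where the rotation generator J is normalised so that
    A E_2 = E_3, A E_3 = -E_2. *)
Definition Tmat (u : R) (v : vec) : vec :=
  vec5 (cosh u * v 0%nat + sinh u * v 1%nat)
       (sinh u * v 0%nat + cosh u * v 1%nat)
       (cos u * v 2%nat - sin u * v 3%nat)
       (sin u * v 2%nat + cos u * v 3%nat)
       (v 4%nat).

Definition xi (u : R) (i : nat) : vec := Tmat u (E i).

Definition inXi (u : R) (x : vec) : vec :=
  fun j => sum_f_R0 (fun i => x i * xi u i j) 4.

Definition a_ (th : R) : R := cos th.
Definition b_ (th : R) : R := sin th.
Definition c_ (th : R) : R := sqrt (cos (2 * th)).
Definition s_ (th q : R) : R := sqrt (1 - (b_ th)^2 * q^2).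

Definition Ycurve (th : R) (u : R) : vec :=
  Tmat u (vec5 (a_ th) 0 (b_ th) 0 (c_ th)).

Definition psiF (th h q : R) (u : R) : vec :=
  let a := a_ th in let b := b_ th in let c := c_ th in let s := s_ th q in
  vadd (inXi u (vec5 0 (- b^2 * q) (- (c / a) * s) (a * b * q) ((b / a) * s)))
       (vscal h (Ycurve th u)).

Definition P1F (th m : R) (u : R) : vec :=
  vadd (inXi u (vec5 0 (a_ th) 0 (b_ th) 0)) (vscal m (Ycurve th u)).

Definition P2F (th q p : R) (u : R) : vec :=
  let a := a_ th in let b := b_ th in let c := c_ th in let s := s_ th q in
  vadd (inXi u (vec5 (- c * q) (- b * s) 0 (a * s) (- a * q)))
       (vscal p (Ycurve th u)).

Definition vderiv_at (F : R -> vec) (u : R) (d : vec) : Prop :=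
  forall i, (i < 5)%nat -> derivable_pt_lim (fun t => F t i) u (d i).

Definition has_vderiv (F F' : R -> vec) : Prop :=
  forall u, vderiv_at F u (F' u).

Definition dual_along (th h m q p : R) (Yh : R -> vec) : Prop :=
  forall u,
    lor (Yh u) (Yh u) = 0 /\
    lor (Yh u) (P1F th m u) = 0 /\
    lor (Yh u) (P2F th q p u) = 0 /\
    lor (Yh u) (psiF th h q u) = 0 /\
    (forall dpsi, vderiv_at (psiF th h q) u dpsi -> lor (Yh u) dpsi = 0) /\
    lor (Yh u) (Ycurve th u) = -1.

(** (mu1, mu2, k1, k2, rho1, rho2) are the Björling data: the structure
    equations along v = 0. *)
Definition bjorling_data (th h m q p : R) (Yh : R -> vec)
    (mu1 mu2 k1 k2 rho1 rho2 : R -> R) : Prop :=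
  let Y := Ycurve th in let psi := psiF th h q in
  let P1 := P1F th m in let P2 := P2F th q p in
  has_vderiv Y (fun u => vadd (vscal (- mu1 u) (Y u)) (P1 u)) /\
  has_vderiv Yh (fun u => vadd (vscal (mu1 u) (Yh u))
                   (vadd (vscal (rho1 u) (P1 u)) (vscal (rho2 u) (P2 u)))) /\
  has_vderiv P1 (fun u => vadd (vscal (mu2 u) (P2 u))
                   (vadd (vscal (2 * k1 u) (psi u))
                   (vadd (Yh u) (vscal (rho1 u) (Y u))))) /\
  has_vderiv P2 (fun u => vadd (vscal (- mu2 u) (P1 u))
                   (vadd (vscal (- 2 * k2 u) (psi u)) (vscal (rho2 u) (Y u)))) /\
  has_vderiv psi (fun u => vadd (vscal (- 2 * k1 u) (P1 u))
                   (vscal (2 * k2 u) (P2 u))).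

Definition p_i (th h m q : R) : R :=
  let a := a_ th in let b := b_ th in let c := c_ th in let s := s_ th q in
  (a * m * h + a^2 * q - b * c * m * s) / (a * c).

Definition rho1_i (th h m q p : R) : R :=
  let a := a_ th in let b := b_ th in let c := c_ th in let s := s_ th q in
  (a^2 * h^2 - 2 * a * b * c * h * s + a^2 * p^2 + c^4 * q^2
   - 2 * a^3 * c * p * q - a^2 * m^2 + c^2) / (2 * a^2).

Definition rho2_i (th h m q p : R) : R :=
  let a := a_ th in let b := b_ th in let c := c_ th in let s := s_ th q in
  (a^2 * c * m * q - a * c * h - a * m * p - b * s) / a.

Definition data_i (th h m q p : R) (mu1 mu2 k1 k2 rho1 rho2 : R) : Prop :=
  let a := a_ th in let b := b_ th in let c := c_ th in let s := s_ th q in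
  mu1 = m /\ mu2 = a * c * q - p /\ k1 = b * c * s / (2 * a) - h / 2 /\
  k2 = - c / 2 /\ rho1 = rho1_i th h m q p /\ rho2 = rho2_i th h m q p.

Definition data_ii (h m p : R) (mu1 mu2 k1 k2 rho1 rho2 : R) : Prop :=
  mu1 = m /\ mu2 = - p /\ k1 = - h / 2 /\ k2 = 0 /\
  rho1 = (h^2 + p^2 - m^2) / 2 /\ rho2 = - p * m - sqrt (1 - h^2 * m^2).

(* Main.v *)
Require Import Defs.
From Stdlib Require Import Reals Nsatz Lia Lra FunctionalExtensionality.
Open Scope R_scope.

Definition Amap (x : vec) : vec := vec5 (x 1%nat) (x 0%nat) (- x 3%nat) (x 2%nat) 0.

Section Alg.
Variables a b c s q ai : R.
Definition gg := c*q*ai.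
Definition cy : vec := vec5 a 0 b 0 c.
Definition cw : vec := vec5 (ai*ai*a/2) 0 (-(ai*ai*b)/2) 0 (-(ai*ai*c)/2).
Definition ce1 : vec := vec5 0 a 0 b 0.
Definition ce2 : vec := vec5 (- c * q) (- b * s) 0 (a * s) (- a * q).
Definition ce3 : vec := vec5 0 (- (b*b) * q) (- (c * ai) * s) (a * b * q) ((b * ai) * s).
Definition lc (x:vec) : vec := fun i => x 0%nat * cy i + x 1%nat * cw i + x 2%nat * ce1 i
   + x 3%nat * ce2 i + x 4%nat * ce3 i.
Definition Bf (x z : vec) : R := -(x 0%nat * z 1%nat + x 1%nat * z 0%nat)
   + gg * (x 1%nat * z 3%nat + x 3%nat * z 1%nat) + x 2%nat * z 2%nat + x 3%nat * z 3%nat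
   + x 4%nat * z 4%nat.
Definition tAy : vec := vec5 0 0 1 0 0.
Definition tAw : vec := vec5 (-gg*ai*b*s) 0 (ai*ai*c*c/2) (-ai*b*s) (-ai*b*b*q).
Definition tAe1 : vec := vec5 (c*c*ai*ai/2+(a*c*q-gg)*gg) 1 0 (a*c*q-gg) (b*c*s*ai).
Definition tAe2 : vec := vec5 (-ai*b*s) 0 (-a*c*q) 0 c.
Definition tAe3 : vec := vec5 (-gg*c-ai*b*b*q) 0 (-b*c*s*ai) (-c) 0.
Definition Alin (x:vec) : vec := fun i => x 0%nat * tAy i + x 1%nat * tAw i + x 2%nat * tAe1 i
   + x 3%nat * tAe2 i + x 4%nat * tAe3 i.
Definition kap (v:vec) : vec :=
  let ry := lor v cy in let rw := lor v cw in let r1 := lor v ce1 in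
  let r2 := lor v ce2 in let r3 := lor v ce3 in
  vec5 (gg*(r2+gg*ry) - rw) (-ry) r1 (r2+gg*ry) r3.

Hypothesis Ha : a * ai = 1.
Hypothesis Hab : a*a + b*b = 1.
Hypothesis Hc : c*c = a*a - b*b.
Hypothesis Hs : s*s = 1 - b*b*q*q.

Ltac un := unfold lor, cy, cw, ce1, ce2, ce3, tAy, tAw, tAe1, tAe2, tAe3, Amap, vec5, Rdiv, gg; cbv beta iota; assert (H2 : 2 * /2 = 1) by field; set (hh := /2) in *.

Lemma gyy : lor cy cy = 0. Proof. un. nsatz. Qed.
Lemma gyw : lor cy cw = -1. Proof. un. nsatz. Qed.
Lemma gy1 : lor cy ce1 = 0. Proof. un. nsatz. Qed.
Lemma gy2 : lor cy ce2 = 0. Proof. un. nsatz. Qed.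
Lemma gy3 : lor cy ce3 = 0. Proof. un. nsatz. Qed.
Lemma gww : lor cw cw = 0. Proof. un. nsatz. Qed.
Lemma gw1 : lor cw ce1 = 0. Proof. un. nsatz. Qed.
Lemma gw2 : lor cw ce2 = gg. Proof. un. nsatz. Qed.
Lemma gw3 : lor cw ce3 = 0. Proof. un. nsatz. Qed.
Lemma g11 : lor ce1 ce1 = 1. Proof. un. nsatz. Qed.
Lemma g12 : lor ce1 ce2 = 0. Proof. un. nsatz. Qed.
Lemma g13 : lor ce1 ce3 = 0. Proof. un. nsatz. Qed.
Lemma g22 : lor ce2 ce2 = 1. Proof. un. nsatz. Qed.
Lemma g23 : lor ce2 ce3 = 0. Proof. un. nsatz. Qed.
Lemma g33 : lor ce3 ce3 = 1. Proof. un. nsatz. Qed.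

Lemma lor_sym x z : lor x z = lor z x. Proof. unfold lor; ring. Qed.

Lemma lor_lc x z : lor (lc x) (lc z) = Bf x z.
Proof.
  transitivity (
   x 0%nat * (z 0%nat * lor cy cy + z 1%nat * lor cy cw + z 2%nat * lor cy ce1 + z 3%nat * lor cy ce2 + z 4%nat * lor cy ce3)
 + x 1%nat * (z 0%nat * lor cy cw + z 1%nat * lor cw cw + z 2%nat * lor cw ce1 + z 3%nat * lor cw ce2 + z 4%nat * lor cw ce3)
 + x 2%nat * (z 0%nat * lor cy ce1 + z 1%nat * lor cw ce1 + z 2%nat * lor ce1 ce1 + z 3%nat * lor ce1 ce2 + z 4%nat * lor ce1 ce3)
 + x 3%nat * (z 0%nat * lor cy ce2 + z 1%nat * lor cw ce2 + z 2%nat * lor ce1 ce2 + z 3%nat * lor ce2 ce2 + z 4%nat * lor ce2 ce3)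
 + x 4%nat * (z 0%nat * lor cy ce3 + z 1%nat * lor cw ce3 + z 2%nat * lor ce1 ce3 + z 3%nat * lor ce2 ce3 + z 4%nat * lor ce3 ce3)).
  - unfold lc, lor. ring.
  - rewrite gyy, gyw, gy1, gy2, gy3, gww, gw1, gw2, gw3, g11, g12, g13, g22, g23, g33. unfold Bf. ring.
Qed.

Lemma lor_lc_l x v : lor (lc x) v = x 0%nat * lor cy v + x 1%nat * lor cw v + x 2%nat * lor ce1 v
   + x 3%nat * lor ce2 v + x 4%nat * lor ce3 v.
Proof. unfold lc, lor; ring. Qed.

Lemma Ay i : (i < 5)%nat -> Amap cy i = lc tAy i.
Proof. intros Hi; unfold lc; do 5 (destruct i as [|i]; [clear Hi; un; nsatz|]); lia. Qed.
Lemma Aw i : (i < 5)%nat -> Amap cw i = lc tAw i.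
Proof. intros Hi; unfold lc; do 5 (destruct i as [|i]; [clear Hi; un; nsatz|]); lia. Qed.
Lemma A1 i : (i < 5)%nat -> Amap ce1 i = lc tAe1 i.
Proof. intros Hi; unfold lc; do 5 (destruct i as [|i]; [clear Hi; un; nsatz|]); lia. Qed.
Lemma A2 i : (i < 5)%nat -> Amap ce2 i = lc tAe2 i.
Proof. intros Hi; unfold lc; do 5 (destruct i as [|i]; [clear Hi; un; nsatz|]); lia. Qed.
Lemma A3 i : (i < 5)%nat -> Amap ce3 i = lc tAe3 i.
Proof. intros Hi; unfold lc; do 5 (destruct i as [|i]; [clear Hi; un; nsatz|]); lia. Qed.

Lemma A_lc x i : (i < 5)%nat -> Amap (lc x) i = lc (Alin x) i.
Proof.
  intros Hi.
  transitivity (x 0%nat * Amap cy i + x 1%nat * Amap cw i + x 2%nat * Amap ce1 i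
   + x 3%nat * Amap ce2 i + x 4%nat * Amap ce3 i).
  - unfold Amap, lc, vec5. do 5 (destruct i as [|i]; [ring|]). ring.
  - rewrite (Ay i Hi), (Aw i Hi), (A1 i Hi), (A2 i Hi), (A3 i Hi). unfold lc, Alin. ring.
Qed.

Lemma compl (v : vec) i : (i < 5)%nat -> v i = lc (kap v) i.
Proof.
  intros Hi. unfold lc, kap.
  do 5 (destruct i as [|i]; [clear Hi; un; nsatz|]); lia.
Qed.

Definition ky : vec := vec5 1 0 0 0 0.
Definition kp1 (m:R) : vec := vec5 m 0 1 0 0.
Definition kp2 (p:R) : vec := vec5 p 0 0 1 0.
Definition kps (h:R) : vec := vec5 h 0 0 0 1.
Definition kn (m p h : R) : vec := vec5 (gg*(p-gg) + (m*m+(p-gg)*(p-gg)+h*h)/2) 1 m (p-gg) h.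
Definition R1e (m p h : R) := c*c*ai*ai/2 + c*c*q*q - c*c*q*q*ai*ai/2 - a*c*p*q + p*p/2
   - b*c*s*h*ai + h*h/2 - m*m/2.
Definition R2e (m p h : R) := -ai*b*s + (a*c*q - p)*m - c*h.

Ltac un2 := unfold Bf, Alin, kn, kp1, kp2, kps, ky, R1e, R2e, vadd, vscal,
  cy, cw, ce1, ce2, ce3, tAy, tAw, tAe1, tAe2, tAe3, Amap, vec5, Rdiv, gg; cbv beta iota;
  assert (H2 : 2 * /2 = 1) by field; set (hh := /2) in *.

Lemma BF_nn m p h : Bf (kn m p h) (kn m p h) = 0. Proof. un2. nsatz. Qed.
Lemma BF_n1 m p h : Bf (kn m p h) (kp1 m) = 0. Proof. un2. nsatz. Qed.
Lemma BF_n2 m p h : Bf (kn m p h) (kp2 p) = 0. Proof. un2. nsatz. Qed.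
Lemma BF_n3 m p h : Bf (kn m p h) (kps h) = 0. Proof. un2. nsatz. Qed.
Lemma BF_ny m p h : Bf (kn m p h) ky = -1. Proof. un2. nsatz. Qed.
Lemma BF_K m p h : a * Bf (kn m p h) (Alin (kps h)) = a*m*h + a*a*q - b*c*m*s - a*c*p.
Proof. un2. nsatz. Qed.

Section Ex.
Variables m p h mu2 kk1 kk2 r1 r2 : R.
Hypothesis HK : a*c*p = a*m*h + a*a*q - b*c*m*s.
Hypothesis Hmu2 : mu2 = a*c*q - p.
Hypothesis Hk1 : 2*kk1 = b*c*s*ai - h.
Hypothesis Hk2 : 2*kk2 = -c.
Hypothesis Hr1 : r1 = R1e m p h.
Hypothesis Hr2 : r2 = R2e m p h.
Ltac fin k := intros Hk; do 5 (destruct k as [|k]; [clear Hk; unfold R1e, R2e, Rdiv in *; un2; nsatz|]); lia.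
Lemma eqY k : (k < 5)%nat -> vadd (vscal (-m) ky) (kp1 m) k = Alin ky k.
Proof. fin k. Qed.
Lemma eqP2 k : (k < 5)%nat ->
  vadd (vscal (-mu2) (kp1 m)) (vadd (vscal (-2*kk2) (kps h)) (vscal r2 ky)) k = Alin (kp2 p) k.
Proof. fin k. Qed.
Lemma eqPs k : (k < 5)%nat ->
  vadd (vscal (-2*kk1) (kp1 m)) (vscal (2*kk2) (kp2 p)) k = Alin (kps h) k.
Proof. fin k. Qed.
Lemma eqP1 k : (k < 5)%nat ->
  vadd (vscal mu2 (kp2 p)) (vadd (vscal (2*kk1) (kps h)) (vadd (kn m p h) (vscal r1 ky))) k
  = Alin (kp1 m) k.
Proof. fin k. Qed.
Lemma eqYh k : (k < 5)%nat ->
  vadd (vscal m (kn m p h)) (vadd (vscal r1 (kp1 m)) (vscal r2 (kp2 p))) k = Alin (kn m p h) k.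
Proof. fin k. Qed.
End Ex.

Lemma R1_from m p h mu2 k1 rho1 : mu2 = a*c*q - p -> 2*k1 = b*c*s*ai - h ->
  mu2*p + 2*k1*h + kn m p h 0%nat + rho1 = tAe1 0%nat -> rho1 = R1e m p h.
Proof. intros E1 E2 E3. unfold kn, tAe1, vec5, R1e, gg, Rdiv in *. cbv beta iota in *.
  assert (H2 : 2 * /2 = 1) by field; set (hh := /2) in *. nsatz. Qed.

Lemma lor_lc_r v x : lor v (lc x) = x 0%nat * lor v cy + x 1%nat * lor v cw + x 2%nat * lor v ce1
   + x 3%nat * lor v ce2 + x 4%nat * lor v ce3.
Proof. unfold lc, lor; ring. Qed.

Lemma lc_ext X Z : (forall k, (k < 5)%nat -> X k = Z k) -> forall i, lc X i = lc Z i.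
Proof.
  intros H i. unfold lc. rewrite (H 0%nat), (H 1%nat), (H 2%nat), (H 3%nat), (H 4%nat) by lia.
  reflexivity.
Qed.

Lemma lor_ext x x' y y' : (forall i, (i < 5)%nat -> x i = x' i) ->
  (forall i, (i < 5)%nat -> y i = y' i) -> lor x y = lor x' y'.
Proof.
  intros H1 H2. unfold lor.
  rewrite (H1 0%nat), (H1 1%nat), (H1 2%nat), (H1 3%nat), (H1 4%nat) by lia.
  rewrite (H2 0%nat), (H2 1%nat), (H2 2%nat), (H2 3%nat), (H2 4%nat) by lia.
  reflexivity.
Qed.

Lemma coeff_ext X Z : (forall e, Bf X e = Bf Z e) -> forall k, (k < 5)%nat -> X k = Z k.
Proof.
  intros H.
  pose proof (H (vec5 1 0 0 0 0)) as E0. pose proof (H (vec5 0 1 0 0 0)) as E1.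
  pose proof (H (vec5 0 0 1 0 0)) as E2. pose proof (H (vec5 0 0 0 1 0)) as E3.
  pose proof (H (vec5 0 0 0 0 1)) as E4.
  unfold Bf, vec5 in E0, E1, E2, E3, E4. cbv beta iota in E0, E1, E2, E3, E4.
  assert (X1 : X 1%nat = Z 1%nat) by lra.
  assert (X3 : X 3%nat = Z 3%nat) by (rewrite X1 in E3; lra).
  assert (X0 : X 0%nat = Z 0%nat) by (rewrite X3 in E1; lra).
  intros k Hk. do 5 (destruct k as [|k]; [lra|]). lia.
Qed.

Lemma Yh_form (z : vec) m p h :
  lor z (lc ky) = -1 -> lor z (lc (kp1 m)) = 0 -> lor z (lc (kp2 p)) = 0 ->
  lor z (lc (kps h)) = 0 -> lor z z = 0 ->
  forall k, (k < 5)%nat -> z k = lc (kn m p h) k.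
Proof.
  intros D1 D2 D3 D4 D5.
  rewrite lor_lc_r in D1, D2, D3, D4. unfold ky, kp1, kp2, kps, vec5 in D1, D2, D3, D4.
  cbv beta iota in D1, D2, D3, D4.
  assert (ry : lor z cy = -1) by lra.
  rewrite ry in D2, D3, D4.
  assert (r1 : lor z ce1 = m) by lra.
  assert (r2 : lor z ce2 = p) by lra.
  assert (r3 : lor z ce3 = h) by lra.
  assert (C : forall i, (i < 5)%nat -> z i = lc (kap z) i) by (intros; apply compl; lia).
  rewrite (lor_ext z (lc (kap z)) z (lc (kap z)) C C), lor_lc in D5.
  unfold Bf, kap, vec5 in D5. cbv beta iota zeta in D5. rewrite ry, r1, r2, r3 in D5.
  assert (rw : lor z cw = - ((m*m+(p-gg)*(p-gg)+h*h)/2)) by (unfold Rdiv; nra).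
  intros k Hk. rewrite (C k Hk). apply lc_ext. intros j Hj.
  unfold kap, kn, vec5; cbv beta iota zeta. rewrite ry, r1, r2, r3, rw.
  do 5 (destruct j as [|j]; [field|]). lia.
Qed.

Lemma R1e_num m p h : 2*a*a*R1e m p h = a*a*h*h - 2*a*b*c*h*s + a*a*p*p + c*c*c*c*q*q
   - 2*a*a*a*c*p*q - a*a*m*m + c*c.
Proof. unfold R1e, Rdiv. assert (H2 : 2 * /2 = 1) by field; set (hh := /2) in *. nsatz. Qed.
End Alg.

Lemma ch_sh u : cosh u * cosh u - sinh u * sinh u = 1.
Proof.
  transitivity (exp u * exp (- u)).
  - unfold cosh, sinh. field.
  - rewrite <- exp_plus, Rplus_opp_r, exp_0. reflexivity.
Qed.

Lemma sc u : sin u * sin u + cos u * cos u = 1.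
Proof. pose proof (sin2_cos2 u) as H. unfold Rsqr in H. exact H. Qed.

Definition Tinv (u : R) (v : vec) : vec :=
  vec5 (cosh u * v 0%nat - sinh u * v 1%nat) (- sinh u * v 0%nat + cosh u * v 1%nat)
       (cos u * v 2%nat + sin u * v 3%nat) (- sin u * v 2%nat + cos u * v 3%nat) (v 4%nat).

Lemma TTinv u v i : (i < 5)%nat -> Tmat u (Tinv u v) i = v i.
Proof.
  intros Hi. pose proof (ch_sh u). pose proof (sc u).
  do 5 (destruct i as [|i]; [clear Hi; unfold Tmat, Tinv, vec5; cbv beta iota; nsatz|]). lia.
Qed.

Lemma lor_T u x y : lor (Tmat u x) (Tmat u y) = lor x y.
Proof. pose proof (ch_sh u). pose proof (sc u). unfold lor, Tmat, vec5; cbv beta iota. nsatz. Qed.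

Lemma T_ext u x y : (forall i, (i < 5)%nat -> x i = y i) -> forall j, Tmat u x j = Tmat u y j.
Proof.
  intros H j. unfold Tmat.
  rewrite (H 0%nat), (H 1%nat), (H 2%nat), (H 3%nat), (H 4%nat) by lia. reflexivity.
Qed.

Lemma inXi_T u x j : inXi u x j = Tmat u x j.
Proof.
  unfold inXi, xi, E, Tmat, vec5.
  destruct j as [|[|[|[|[|j]]]]]; simpl; ring.
Qed.

Definition LC th q := lc (a_ th) (b_ th) (c_ th) (s_ th q) q (/ a_ th).

Ltac frm j := unfold Ycurve, P1F, P2F, psiF, vadd, vscal; repeat rewrite inXi_T;
  unfold LC, lc, ky, kp1, kp2, kps, cy, cw, ce1, ce2, ce3, Tmat, vec5, Rdiv;
  destruct j as [|[|[|[|[|j]]]]]; simpl; ring.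

Lemma frY th q u j : Ycurve th u j = Tmat u (LC th q ky) j.
Proof. frm j. Qed.
Lemma frP1 th q m u j : P1F th m u j = Tmat u (LC th q (kp1 m)) j.
Proof. frm j. Qed.
Lemma frP2 th q p u j : P2F th q p u j = Tmat u (LC th q (kp2 p)) j.
Proof. frm j. Qed.
Lemma frPs th q h u j : psiF th h q u j = Tmat u (LC th q (kps h)) j.
Proof. frm j. Qed.

Lemma dpl_eq f x l l' : derivable_pt_lim f x l -> l = l' -> derivable_pt_lim f x l'.
Proof. intros H ->; exact H. Qed.

Lemma dT x u i : derivable_pt_lim (fun t => Tmat t x i) u (Tmat u (Amap x) i).
Proof.
  destruct i as [|[|[|[|[|i]]]]]; unfold Tmat, Amap, vec5; cbv beta iota.
  - eapply dpl_eq.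
    + exact (derivable_pt_lim_plus _ _ u _ _
        (derivable_pt_lim_mult cosh (fct_cte (x 0%nat)) u _ _ (derivable_pt_lim_cosh u) (derivable_pt_lim_const _ u))
        (derivable_pt_lim_mult sinh (fct_cte (x 1%nat)) u _ _ (derivable_pt_lim_sinh u) (derivable_pt_lim_const _ u))).
    + unfold fct_cte. ring.
  - eapply dpl_eq.
    + exact (derivable_pt_lim_plus _ _ u _ _
        (derivable_pt_lim_mult sinh (fct_cte (x 0%nat)) u _ _ (derivable_pt_lim_sinh u) (derivable_pt_lim_const _ u))
        (derivable_pt_lim_mult cosh (fct_cte (x 1%nat)) u _ _ (derivable_pt_lim_cosh u) (derivable_pt_lim_const _ u))).
    + unfold fct_cte. ring.
  - eapply dpl_eq.
    + exact (derivable_pt_lim_minus _ _ u _ _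
        (derivable_pt_lim_mult cos (fct_cte (x 2%nat)) u _ _ (derivable_pt_lim_cos u) (derivable_pt_lim_const _ u))
        (derivable_pt_lim_mult sin (fct_cte (x 3%nat)) u _ _ (derivable_pt_lim_sin u) (derivable_pt_lim_const _ u))).
    + unfold fct_cte. ring.
  - eapply dpl_eq.
    + exact (derivable_pt_lim_plus _ _ u _ _
        (derivable_pt_lim_mult sin (fct_cte (x 2%nat)) u _ _ (derivable_pt_lim_sin u) (derivable_pt_lim_const _ u))
        (derivable_pt_lim_mult cos (fct_cte (x 3%nat)) u _ _ (derivable_pt_lim_cos u) (derivable_pt_lim_const _ u))).
    + unfold fct_cte. ring.
  - exact (derivable_pt_lim_const _ u).
  - exact (derivable_pt_lim_const _ u).
Qed.

Lemma deriv_frame (F : R -> vec) X0 (Hf : forall t j, F t j = Tmat t X0 j) u i L :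
  derivable_pt_lim (fun t => F t i) u L -> L = Tmat u (Amap X0) i.
Proof.
  intros H.
  assert (E : (fun t => F t i) = (fun t => Tmat t X0 i)) by (apply functional_extensionality; intro; apply Hf).
  rewrite E in H. exact (uniqueness_limite _ _ _ _ H (dT X0 u i)).
Qed.

Lemma deriv_frame' (F : R -> vec) X0 (Hf : forall t j, F t j = Tmat t X0 j) u i :
  derivable_pt_lim (fun t => F t i) u (Tmat u (Amap X0) i).
Proof.
  assert (E : (fun t => F t i) = (fun t => Tmat t X0 i)) by (apply functional_extensionality; intro; apply Hf).
  rewrite E. apply dT.
Qed.

Lemma abs1 x : Rabs x <= 1 -> x * x <= 1.
Proof. intros H. unfold Rabs in H. destruct (Rcase_abs x); nra. Qed.

Lemma rels th q : 0 <= th <= PI/4 -> Rabs (sin th * q) <= 1 ->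
  0 < a_ th /\ a_ th * / a_ th = 1 /\ a_ th * a_ th + b_ th * b_ th = 1 /\
  c_ th * c_ th = a_ th * a_ th - b_ th * b_ th /\
  s_ th q * s_ th q = 1 - b_ th * b_ th * q * q /\ 0 <= b_ th.
Proof.
  intros Hth Hq. pose proof PI_RGT_0.
  assert (Ha : 0 < a_ th) by (unfold a_; apply cos_gt_0; lra).
  split; [exact Ha|]. split; [field; lra|].
  split; [unfold a_, b_; pose proof (sc th); lra|].
  split.
  - unfold c_, a_, b_. rewrite sqrt_sqrt. apply cos_2a. apply cos_ge_0; lra.
  - split.
    + unfold s_. rewrite sqrt_sqrt; [ring|]. pose proof (abs1 _ Hq). unfold b_. nra.
    + unfold b_. apply sin_ge_0; lra.
Qed.

Section Nec.
Variables (th h m q p : R) (Yh : R -> vec) (mu1 mu2 k1 k2 rho1 rho2 : R -> R).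
Hypothesis Hth : 0 <= th <= PI/4.
Hypothesis Hq : Rabs (sin th * q) <= 1.
Hypothesis Hd : dual_along th h m q p Yh.
Hypothesis Hb : bjorling_data th h m q p Yh mu1 mu2 k1 k2 rho1 rho2.

Let KN := kn (c_ th) q (/ a_ th) m p h.

Lemma Tcoef u X Z : (forall i, (i < 5)%nat -> Tmat u (LC th q X) i = Tmat u (LC th q Z) i) ->
  forall k, (k < 5)%nat -> X k = Z k.
Proof.
  destruct (rels th q Hth Hq) as (Hapos & Ha & Hab & Hc & Hs & Hb0).
  intros H. apply (coeff_ext (c_ th) q (/ a_ th)). intro e. unfold LC in H.
  rewrite <- (lor_lc _ _ _ _ _ _ Ha Hab Hc Hs), <- (lor_lc _ _ _ _ _ _ Ha Hab Hc Hs).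
  rewrite <- (lor_T u), <- (lor_T u (LC th q Z)). apply lor_ext; auto.
Qed.

Lemma YhF u j : (j < 5)%nat -> Yh u j = Tmat u (LC th q KN) j.
Proof.
  destruct (rels th q Hth Hq) as (Hapos & Ha & Hab & Hc & Hs & Hb0).
  destruct (Hd u) as (D1 & D2 & D3 & D4 & D5 & D6).
  set (z := Tinv u (Yh u)).
  assert (HZ : forall j, (j < 5)%nat -> Yh u j = Tmat u z j) by (intros; symmetry; apply TTinv; auto).
  assert (conv : forall X, lor (Yh u) (Tmat u (LC th q X)) = lor z (LC th q X)).
  { intro X. rewrite <- (lor_T u z (LC th q X)). apply lor_ext; auto. }
  assert (E6 : lor z (LC th q ky) = -1).
  { rewrite <- conv, <- D6. apply lor_ext; intros; [reflexivity | symmetry; apply frY]. }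
  assert (E2 : lor z (LC th q (kp1 m)) = 0).
  { rewrite <- conv, <- D2. apply lor_ext; intros; [reflexivity | symmetry; apply frP1]. }
  assert (E3 : lor z (LC th q (kp2 p)) = 0).
  { rewrite <- conv, <- D3. apply lor_ext; intros; [reflexivity | symmetry; apply frP2]. }
  assert (E4 : lor z (LC th q (kps h)) = 0).
  { rewrite <- conv, <- D4. apply lor_ext; intros; [reflexivity | symmetry; apply frPs]. }
  assert (E1 : lor z z = 0).
  { rewrite <- D1, <- (lor_T u z z). apply lor_ext; intros; symmetry; auto. }
  intros Hj. rewrite (HZ j Hj). apply T_ext. intros i Hi.
  exact (Yh_form _ _ _ _ _ _ Ha Hab Hc Hs z m p h E6 E2 E3 E4 E1 i Hi).
Qed.

Lemma TA u X i : (i < 5)%nat -> Tmat u (Amap (LC th q X)) i =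
   Tmat u (LC th q (Alin (a_ th) (b_ th) (c_ th) (s_ th q) q (/ a_ th) X)) i.
Proof.
  destruct (rels th q Hth Hq) as (Hapos & Ha & Hab & Hc & Hs & Hb0).
  intros _. apply T_ext. intros k Hk. apply (A_lc _ _ _ _ _ _ Ha Hab Hc Hs). exact Hk.
Qed.

Lemma nec_K : a_ th * c_ th * p = a_ th * m * h + a_ th * a_ th * q - b_ th * c_ th * m * s_ th q.
Proof.
  destruct (rels th q Hth Hq) as (Hapos & Ha & Hab & Hc & Hs & Hb0).
  destruct (Hd 0) as (D1 & D2 & D3 & D4 & D5 & D6).
  assert (Hv : vderiv_at (psiF th h q) 0 (Tmat 0 (Amap (LC th q (kps h))))).
  { intros i Hi. apply deriv_frame'. intros; apply frPs. }
  specialize (D5 _ Hv).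
  assert (E : lor (Tmat 0 (LC th q KN))
     (Tmat 0 (LC th q (Alin (a_ th) (b_ th) (c_ th) (s_ th q) q (/ a_ th) (kps h)))) = 0).
  { etransitivity; [|exact D5]. apply lor_ext; intros; [symmetry; apply YhF; auto| symmetry; apply TA; auto]. }
  rewrite lor_T in E. unfold LC in E. rewrite (lor_lc _ _ _ _ _ _ Ha Hab Hc Hs) in E.
  pose proof (BF_K _ _ _ _ _ _ Ha Hab Hc Hs m p h) as K. unfold KN in E. rewrite E in K. lra.
Qed.

Lemma nec_data u :
  mu1 u = m /\ mu2 u = a_ th * c_ th * q - p /\
  2 * k1 u = b_ th * c_ th * s_ th q * / a_ th - h /\ 2 * k2 u = - c_ th /\
  rho1 u = R1e (a_ th) (b_ th) (c_ th) (s_ th q) q (/ a_ th) m p h /\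
  rho2 u = R2e (a_ th) (b_ th) (c_ th) (s_ th q) q (/ a_ th) m p h.
Proof.
  destruct (rels th q Hth Hq) as (Hapos & Ha & Hab & Hc & Hs & Hb0).
  destruct Hb as (BY & BYh & BP1 & BP2 & BPs).
  set (AL := Alin (a_ th) (b_ th) (c_ th) (s_ th q) q (/ a_ th)).
  assert (CY : forall k, (k < 5)%nat -> vadd (vscal (- mu1 u) ky) (kp1 m) k = AL ky k).
  { apply (Tcoef u). intros i Hi. unfold AL. rewrite <- TA by auto.
    rewrite <- (deriv_frame _ _ (frY th q) u i _ (BY u i Hi)). cbv beta.
    unfold vadd, vscal. rewrite (frY th q), (frP1 th q).
    unfold LC, lc, Tmat, ky, kp1, vec5. destruct i as [|[|[|[|[|i]]]]]; try lia; simpl; ring. }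
  assert (CP1 : forall k, (k < 5)%nat -> vadd (vscal (mu2 u) (kp2 p)) (vadd (vscal (2 * k1 u) (kps h))
          (vadd KN (vscal (rho1 u) ky))) k = AL (kp1 m) k).
  { apply (Tcoef u). intros i Hi. unfold AL. rewrite <- TA by auto.
    rewrite <- (deriv_frame _ _ (frP1 th q m) u i _ (BP1 u i Hi)). cbv beta.
    unfold vadd, vscal. rewrite (frP2 th q), (frPs th q), (YhF u i Hi), (frY th q).
    unfold LC, lc, Tmat, ky, kp2, kps, vec5. destruct i as [|[|[|[|[|i]]]]]; try lia; simpl; ring. }
  assert (CP2 : forall k, (k < 5)%nat -> vadd (vscal (- mu2 u) (kp1 m)) (vadd (vscal (- 2 * k2 u) (kps h))
          (vscal (rho2 u) ky)) k = AL (kp2 p) k).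
  { apply (Tcoef u). intros i Hi. unfold AL. rewrite <- TA by auto.
    rewrite <- (deriv_frame _ _ (frP2 th q p) u i _ (BP2 u i Hi)). cbv beta.
    unfold vadd, vscal. rewrite (frP1 th q), (frPs th q), (frY th q).
    unfold LC, lc, Tmat, ky, kp1, kps, vec5. destruct i as [|[|[|[|[|i]]]]]; try lia; simpl; ring. }
  pose proof (CY 0%nat ltac:(lia)) as Y0.
  pose proof (CP1 0%nat ltac:(lia)) as P10. pose proof (CP1 3%nat ltac:(lia)) as P13.
  pose proof (CP1 4%nat ltac:(lia)) as P14.
  pose proof (CP2 0%nat ltac:(lia)) as P20. pose proof (CP2 4%nat ltac:(lia)) as P24.
  unfold AL, Alin, vadd, vscal, ky, kp1, kp2, kps, vec5 in Y0, P10, P13, P14, P20, P24.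
  cbv beta iota in Y0, P10, P13, P14, P20, P24.
  unfold tAy, tAw, tAe1, tAe2, tAe3, vec5 in Y0, P13, P14, P20, P24.
  unfold tAy, tAw, tAe2, tAe3, vec5 in P10.
  cbv beta iota in Y0, P10, P13, P14, P20, P24.
  unfold KN, kn, vec5 in P13, P14. cbv beta iota in P13, P14.
  assert (Hmu2 : mu2 u = a_ th * c_ th * q - p) by (unfold gg in P13; lra).
  assert (Hk1 : 2 * k1 u = b_ th * c_ th * s_ th q * / a_ th - h) by lra.
  assert (Hk2 : 2 * k2 u = - c_ th) by lra.
  repeat split.
  - lra.
  - exact Hmu2.
  - exact Hk1.
  - exact Hk2.
  - apply (R1_from _ _ _ _ _ _ Ha Hab Hc Hs m p h (mu2 u) (k1 u)); auto.
    unfold KN in P10. lra.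
  - unfold R2e. rewrite Hmu2 in P20.
    assert (k2 u = - c_ th / 2) by lra. rewrite H in P20. lra.
Qed.
End Nec.

Section Ex.
Variables (th h m q p mu2v k1v k2v r1v r2v : R).
Hypothesis Hth : 0 <= th <= PI/4.
Hypothesis Hq : Rabs (sin th * q) <= 1.
Hypothesis HK : a_ th * c_ th * p = a_ th * m * h + a_ th * a_ th * q - b_ th * c_ th * m * s_ th q.
Hypothesis Hmu2 : mu2v = a_ th * c_ th * q - p.
Hypothesis Hk1 : 2 * k1v = b_ th * c_ th * s_ th q * / a_ th - h.
Hypothesis Hk2 : 2 * k2v = - c_ th.
Hypothesis Hr1 : r1v = R1e (a_ th) (b_ th) (c_ th) (s_ th q) q (/ a_ th) m p h.
Hypothesis Hr2 : r2v = R2e (a_ th) (b_ th) (c_ th) (s_ th q) q (/ a_ th) m p h.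

Let KN := kn (c_ th) q (/ a_ th) m p h.
Definition Yh0 (u : R) : vec := Tmat u (LC th q KN).

Lemma TA' u X i : (i < 5)%nat -> Tmat u (Amap (LC th q X)) i =
   Tmat u (LC th q (Alin (a_ th) (b_ th) (c_ th) (s_ th q) q (/ a_ th) X)) i.
Proof.
  destruct (rels th q Hth Hq) as (Hapos & Ha & Hab & Hc & Hs & Hb0).
  intros _. apply T_ext. intros k Hk. apply (A_lc _ _ _ _ _ _ Ha Hab Hc Hs). exact Hk.
Qed.

Lemma ex_dual : dual_along th h m q p Yh0.
Proof.
  destruct (rels th q Hth Hq) as (Hapos & Ha & Hab & Hc & Hs & Hb0).
  assert (G : forall u X (V : vec), (forall j, V j = Tmat u (LC th q X) j) ->
     lor (Yh0 u) V = Bf (c_ th) q (/ a_ th) KN X).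
  { intros u X V HV. unfold Yh0.
    transitivity (lor (Tmat u (LC th q KN)) (Tmat u (LC th q X))).
    - apply lor_ext; intros; [reflexivity| apply HV].
    - rewrite lor_T. unfold LC. apply (lor_lc _ _ _ _ _ _ Ha Hab Hc Hs). }
  intro u. split; [|split; [|split; [|split; [|split]]]].
  - rewrite (G u KN) by reflexivity. eapply BF_nn; eauto.
  - rewrite (G u (kp1 m)) by apply frP1. eapply BF_n1; eauto.
  - rewrite (G u (kp2 p)) by apply frP2. eapply BF_n2; eauto.
  - rewrite (G u (kps h)) by apply frPs. eapply BF_n3; eauto.
  - intros dpsi Hdp.
    assert (E : lor (Yh0 u) dpsi = lor (Yh0 u) (Tmat u (LC th q (Alin (a_ th) (b_ th) (c_ th) (s_ th q) q (/ a_ th) (kps h))))).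
    { apply lor_ext; intros i Hi; [reflexivity|].
      rewrite <- TA' by exact Hi. exact (deriv_frame _ _ (frPs th q h) u i _ (Hdp i Hi)). }
    rewrite E, (G u _ _ (fun j => eq_refl)).
    pose proof (BF_K _ _ _ _ _ _ Ha Hab Hc Hs m p h) as K.
    assert (a_ th * Bf (c_ th) q (/ a_ th) KN (Alin (a_ th) (b_ th) (c_ th) (s_ th q) q (/ a_ th) (kps h)) = 0)
      by (unfold KN; rewrite K; lra).
    apply (Rmult_eq_reg_l (a_ th)); [|lra]. lra.
  - rewrite (G u ky) by apply frY. eapply BF_ny; eauto.
Qed.

Ltac exd F Hf X EQ i :=
  intros u i Hi; eapply dpl_eq; [apply (deriv_frame' F _ Hf u i)|];
  rewrite TA' by exact Hi;
  transitivity (Tmat u (LC th q X) i);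
  [ apply T_ext; intros kk Hkk; apply lc_ext; intros k Hk; symmetry; eapply EQ; eauto
  | unfold vadd, vscal, Yh0; rewrite ?(frY th q), ?(frP1 th q), ?(frP2 th q), ?(frPs th q);
    unfold KN, LC, lc, Tmat, ky, kp1, kp2, kps, kn, vec5;
    destruct i as [|[|[|[|[|i]]]]]; try lia; simpl; ring ].

Lemma ex_bj : bjorling_data th h m q p Yh0 (fun _ => m) (fun _ => mu2v) (fun _ => k1v)
   (fun _ => k2v) (fun _ => r1v) (fun _ => r2v).
Proof.
  destruct (rels th q Hth Hq) as (Hapos & Ha & Hab & Hc & Hs & Hb0).
  split; [|split; [|split; [|split]]].
  - exd (Ycurve th) (frY th q) (vadd (vscal (-m) ky) (kp1 m)) eqY i.
  - exd Yh0 (fun t j => @eq_refl R (Yh0 t j)) (vadd (vscal m KN) (vadd (vscal r1v (kp1 m)) (vscal r2v (kp2 p)))) eqYh i.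
  - exd (P1F th m) (frP1 th q m) (vadd (vscal mu2v (kp2 p)) (vadd (vscal (2*k1v) (kps h)) (vadd KN (vscal r1v ky)))) eqP1 i.
  - exd (P2F th q p) (frP2 th q p) (vadd (vscal (-mu2v) (kp1 m)) (vadd (vscal (-2*k2v) (kps h)) (vscal r2v ky))) eqP2 i.
  - exd (psiF th h q) (frPs th q h) (vadd (vscal (-2*k1v) (kp1 m)) (vscal (2*k2v) (kp2 p))) eqPs i.
Qed.
End Ex.

Lemma pw2 x : x ^ 2 = x * x. Proof. ring. Qed.
Lemma pw3 x : x ^ 3 = x * x * x. Proof. ring. Qed.
Lemma pw4 x : x ^ 4 = x * x * x * x. Proof. ring. Qed.

Lemma R1e_def th q h m p : 0 <= th <= PI/4 -> Rabs (sin th * q) <= 1 ->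
  R1e (a_ th) (b_ th) (c_ th) (s_ th q) q (/ a_ th) m p h = rho1_i th h m q p.
Proof.
  intros Hth Hq. destruct (rels th q Hth Hq) as (Hapos & Ha & Hab & Hc & Hs & Hb0).
  pose proof (R1e_num _ _ _ _ _ _ Ha Hab Hc Hs m p h) as N.
  unfold rho1_i. cbv zeta. rewrite !pw4, !pw3, !pw2.
  apply (Rmult_eq_reg_l (2 * a_ th * a_ th)); [|nra].
  rewrite N. field. lra.
Qed.

Lemma R2e_def th q h m p : 0 < a_ th ->
  R2e (a_ th) (b_ th) (c_ th) (s_ th q) q (/ a_ th) m p h = rho2_i th h m q p.
Proof. intros Ha. unfold R2e, rho2_i. cbv zeta. field. lra. Qed.

Theorem mainTheorem8 :
  (forall (th h m q p : R) (Yh : R -> vec) (mu1 mu2 k1 k2 rho1 rho2 : R -> R),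
     0 <= th <= PI / 4 ->
     Rabs (sin th * q) <= 1 ->
     dual_along th h m q p Yh ->
     bjorling_data th h m q p Yh mu1 mu2 k1 k2 rho1 rho2 ->
     (c_ th <> 0 ->
        p = p_i th h m q /\
        forall u, data_i th h m q p (mu1 u) (mu2 u) (k1 u) (k2 u) (rho1 u) (rho2 u)) /\
     (c_ th = 0 ->
        Rabs (h * m) <= 1 /\
        forall u, data_ii h m p (mu1 u) (mu2 u) (k1 u) (k2 u) (rho1 u) (rho2 u))) /\
  (forall th h m q : R,
     0 <= th < PI / 4 ->
     Rabs (sin th * q) <= 1 ->
     let p := p_i th h m q in
     exists Yh : R -> vec,
       dual_along th h m q p Yh /\
       bjorling_data th h m q p Yh
         (fun _ => m) (fun _ => a_ th * c_ th * q - p)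
         (fun _ => b_ th * c_ th * s_ th q / (2 * a_ th) - h / 2)
         (fun _ => - c_ th / 2)
         (fun _ => rho1_i th h m q p) (fun _ => rho2_i th h m q p)) /\
  (forall h m p : R,
     Rabs (h * m) <= 1 ->
     exists (q : R) (Yh : R -> vec),
       Rabs (sin (PI / 4) * q) <= 1 /\
       dual_along (PI / 4) h m q p Yh /\
       bjorling_data (PI / 4) h m q p Yh
         (fun _ => m) (fun _ => - p) (fun _ => - h / 2) (fun _ => 0)
         (fun _ => (h^2 + p^2 - m^2) / 2)
         (fun _ => - p * m - sqrt (1 - h^2 * m^2))).
Proof.
  split; [|split].
  - intros th h m q p Yh mu1 mu2 k1 k2 rho1 rho2 Hth Hq Hd Hb.
    destruct (rels th q Hth Hq) as (Hapos & Ha & Hab & Hc & Hs & Hb0).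
    pose proof (nec_K th h m q p Yh Hth Hq Hd) as K.
    pose proof (nec_data th h m q p Yh mu1 mu2 k1 k2 rho1 rho2 Hth Hq Hd Hb) as D.
    split.
    + intros Hc0. split.
      * unfold p_i. cbv zeta.
        apply (Rmult_eq_reg_l (a_ th * c_ th)); [| apply Rmult_integral_contrapositive; split; lra].
        rewrite K. field. split; lra.
      * intro u. destruct (D u) as (D1 & D2 & D3 & D4 & D5 & D6).
        unfold data_i. cbv zeta.
        split; [exact D1|]. split; [exact D2|]. split.
        { replace (b_ th * c_ th * s_ th q / (2 * a_ th)) with (b_ th * c_ th * s_ th q * / a_ th / 2)
            by (field; lra). lra. }
        split; [lra|]. split.
        { rewrite D5. apply R1e_def; auto. }
        { rewrite D6. apply R2e_def; auto. }
    + intros Hc0.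
      assert (Eab : b_ th = a_ th) by (rewrite Hc0 in Hc; nra).
      assert (Eq : a_ th * q = - (h * m)).
      { rewrite Hc0 in K. apply (Rmult_eq_reg_l (a_ th)); [|lra]. nra. }
      split.
      * replace (h * m) with (- (sin th * q)).
        -- rewrite Rabs_Ropp. exact Hq.
        -- change (sin th) with (b_ th). rewrite Eab. lra.
      * intro u. destruct (D u) as (D1 & D2 & D3 & D4 & D5 & D6).
        rewrite Hc0 in D2, D3, D4, D5, D6.
        unfold data_ii.
        split; [exact D1|]. split; [lra|]. split; [lra|]. split; [lra|]. split.
        { rewrite D5. unfold R1e. field; lra. }
        { rewrite D6. unfold R2e. unfold s_.
          replace (1 - b_ th ^ 2 * q ^ 2) with (1 - h ^ 2 * m ^ 2).
          - rewrite Eab. field. lra.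
          - rewrite Eab. replace (a_ th ^ 2 * q ^ 2) with ((a_ th * q)^2) by ring. rewrite Eq. ring. }
  - intros th h m q Hth Hq p.
    assert (Hth' : 0 <= th <= PI/4) by lra.
    destruct (rels th q Hth' Hq) as (Hapos & Ha & Hab & Hc & Hs & Hb0).
    assert (Hcpos : 0 < c_ th).
    { unfold c_. apply sqrt_lt_R0. apply cos_gt_0; pose proof PI_RGT_0; lra. }
    assert (HK : a_ th * c_ th * p = a_ th * m * h + a_ th * a_ th * q - b_ th * c_ th * m * s_ th q).
    { unfold p, p_i. cbv zeta. field. split; lra. }
    exists (Yh0 th h m q p). split.
    + apply ex_dual; auto.
    + apply ex_bj; auto.
      * field. lra.
      * field.
      * symmetry. apply R1e_def; auto.
      * symmetry. apply R2e_def; auto.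
  - intros h m p Hhm.
    pose proof PI_RGT_0.
    assert (Hth : 0 <= PI/4 <= PI/4) by lra.
    assert (Hsc : sin (PI/4) = a_ (PI/4)) by (unfold a_; rewrite sin_PI4, cos_PI4; reflexivity).
    assert (Hapos : 0 < a_ (PI/4)) by (unfold a_; apply cos_gt_0; lra).
    set (q := - (h * m) / a_ (PI/4)).
    assert (Hq : Rabs (sin (PI / 4) * q) <= 1).
    { replace (sin (PI/4) * q) with (- (h * m)).
      - rewrite Rabs_Ropp. exact Hhm.
      - rewrite Hsc. unfold q. field. lra. }
    destruct (rels (PI/4) q Hth Hq) as (_ & Ha & Hab & Hc & Hs & Hb0).
    assert (Hc0 : c_ (PI/4) = 0).
    { unfold c_. replace (2 * (PI / 4)) with (PI / 2) by field. rewrite cos_PI2. apply sqrt_0. }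
    assert (Eab : b_ (PI/4) = a_ (PI/4)) by exact Hsc.
    assert (HK : a_ (PI/4) * c_ (PI/4) * p = a_ (PI/4) * m * h + a_ (PI/4) * a_ (PI/4) * q
                 - b_ (PI/4) * c_ (PI/4) * m * s_ (PI/4) q).
    { rewrite Hc0. unfold q. field. lra. }
    exists q, (Yh0 (PI/4) h m q p). split; [exact Hq|]. split.
    + apply ex_dual; auto.
    + apply ex_bj; auto.
      * rewrite Hc0. lra.
      * rewrite Hc0. lra.
      * rewrite Hc0. lra.
      * unfold R1e. rewrite Hc0. field; lra.
      * unfold R2e. rewrite Hc0. unfold s_.
        replace (1 - b_ (PI/4) ^ 2 * q ^ 2) with (1 - h ^ 2 * m ^ 2).
        -- rewrite Eab. field. lra.
        -- rewrite Eab. unfold q. field. lra.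
Qed.
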